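(* For every positive integer $n$, $$\int_0^1 \ln \left(1-\sqrt{x}\right) P_{n}(2 x-1) \, dx=\frac{(-1)^n - 4 n - 2}{2 n (n + 1) (2 n + 1)}.$$
   Context: $P_n$ denotes the $n$-th Legendre polynomial, $P_n(x) = \frac{1}{2^n n!}\frac{d^n}{dx^n}(x^2-1)^n$. *)

(* Defs.v *)
From Stdlib Require Import Reals.
From Coquelicot Require Import Coquelicot.
Open Scope R_scope.

Definition Legendre (n : nat) (x : R) : R :=
  / (2 ^ n * INR (Factorial.fact n)) * Derive_n (fun y => (y ^ 2 - 1) ^ n) n x.

(* Main.v *)
Require Import Defs.
From Stdlib Require Import Reals Lra Lia FunctionalExtensionality.
From Coquelicot Require Import Coquelicot.
Open Scope R_scope.


Lemma is_derive_eq (f : R -> R) x l l' : is_derive f x l -> l = l' -> is_derive f x l'.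
Proof. intros H ->; exact H. Qed.

Lemma is_derive_psum (c : nat -> R) (e : nat -> nat) (N : nat) (x : R) :
  is_derive (fun x => sum_f_R0 (fun i => c i * x ^ e i) N) x
    (sum_f_R0 (fun i => c i * INR (e i) * x ^ (e i - 1)) N).
Proof.
  induction N as [|N IH]; simpl.
  - replace (e 0%nat - 1)%nat with (Init.Nat.pred (e 0%nat)) by lia.
    auto_derive; [easy| ring].
  - apply (is_derive_plus (fun x => sum_f_R0 (fun i => c i * x ^ e i) N) (fun x => c (S N) * x ^ e (S N))); [exact IH|].
    replace (e (S N) - 1)%nat with (Init.Nat.pred (e (S N))) by lia.
    auto_derive; [easy| ring].
Qed.

Fixpoint ff (e m : nat) : R := match m with 0%nat => 1 | S m => ff e m * INR (e - m) end.

Lemma Derive_n_psum (c : nat -> R) (e : nat -> nat) (N m : nat) (x : R) :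
  Derive_n (fun x => sum_f_R0 (fun i => c i * x ^ e i) N) m x =
  sum_f_R0 (fun i => c i * ff (e i) m * x ^ (e i - m)) N.
Proof.
  revert x; induction m as [|m IH]; intro x; simpl.
  - apply sum_eq; intros i _. rewrite Nat.sub_0_r; ring.
  - rewrite (Derive_ext _ (fun x => sum_f_R0 (fun i => (c i * ff (e i) m) * x ^ (e i - m)) N)).
    2: { intro t. rewrite IH. apply sum_eq; intros; ring. }
    apply is_derive_unique.
    eapply is_derive_eq. apply (is_derive_psum (fun i => c i * ff (e i) m) (fun i => e i - m)%nat).
    simpl. apply sum_eq; intros i _. replace (e i - m - 1)%nat with (e i - S m)%nat by lia. ring.
Qed.

Lemma ex_derive_n_psum (c : nat -> R) (e : nat -> nat) (N k : nat) (x : R) :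
  ex_derive_n (fun x => sum_f_R0 (fun i => c i * x ^ e i) N) k x.
Proof.
  destruct k as [|k]; simpl; [easy|].
  eapply ex_derive_ext. { intro t. symmetry. apply Derive_n_psum. }
  eexists. apply (is_derive_psum (fun i => c i * ff (e i) k) (fun i => e i - k)%nat).
Qed.

Definition a (n k : nat) : R :=
  (-1)^(n+k) * Binomial.C n k * INR (Factorial.fact (n+k)) / (INR (Factorial.fact k) * INR (Factorial.fact n)).
Definition Pt n u := sum_f_R0 (fun k => a n k * u ^ k) n.

Lemma expand n (b y : R) :
  (y * (y + b))^n = sum_f_R0 (fun i => (Binomial.C n i * b^(n-i)) * y^(n+i)) n.
Proof.
  rewrite Rpow_mult_distr, binomial, scal_sum. apply sum_eq; intros i _.
  rewrite pow_add; ring.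
Qed.

Lemma ff_fact e m : (m <= e)%nat -> ff e m * INR (Factorial.fact (e - m)) = INR (Factorial.fact e).
Proof.
  induction m as [|m IH]; intro H; simpl.
  - rewrite Nat.sub_0_r; ring.
  - replace (e - m)%nat with (S (e - S m)) in IH by lia.
    rewrite <- IH by lia. rewrite fact_simpl, mult_INR.
    replace (S (e - S m)) with (e - m)%nat by lia. ring.
Qed.

Lemma F1 n x : Legendre n (2*x-1) = Pt n x.
Proof.
  unfold Legendre.
  replace (2*x-1) with (2*x + -1) by ring.
  rewrite <- (Derive_n_comp_trans (fun y => (y^2-1)^n)).
  set (h2 := fun y => ((y + -1)^2 - 1)^n).
  assert (E2 : forall z, sum_f_R0 (fun i => (Binomial.C n i * (-2)^(n-i)) * z^(n+i)) n = h2 z).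
  { intro z. unfold h2. rewrite <- expand. f_equal. ring. }
  assert (Hs := Derive_n_comp_scal h2 2 n x).
  specialize (Hs ltac:(apply filter_forall; intros z k _; eapply ex_derive_n_ext; [apply E2| apply ex_derive_n_psum])).
  change (Derive_n (fun y => (y + -1) ^ 2 - 1) n (2 * x)) with (Derive_n h2 n (2*x)).
  replace (Derive_n h2 n (2*x)) with (/2^n * Derive_n (fun y => h2 (2*y)) n x).
  2: { rewrite Hs. field. apply pow_nonzero; lra. }
  rewrite (Derive_n_ext _ (fun x => sum_f_R0 (fun i => (4^n * Binomial.C n i * (-1)^(n-i)) * x^(n+i)) n)).
  2: { intro t. unfold h2. replace (((2*t + -1)^2 - 1)) with (4 * (t * (t + -1))) by ring.
       rewrite Rpow_mult_distr, expand, scal_sum. apply sum_eq; intros; ring. }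
  rewrite Derive_n_psum. unfold Pt. rewrite scal_sum, scal_sum. apply sum_eq; intros i Hi.
  replace (n + i - n)%nat with i by lia.
  assert (Hf := ff_fact (n+i) n ltac:(lia)). replace (n + i - n)%nat with i in Hf by lia.
  unfold a.
  replace ((-1)^(n+i)) with ((-1)^(n-i)).
  2: { replace (n+i)%nat with ((n-i) + 2*i)%nat by lia. rewrite pow_add, pow_mult. 
       replace ((-1)^2) with 1 by ring. rewrite pow1; ring. }
  replace (4^n) with (2^n*2^n) by (rewrite <- Rpow_mult_distr; f_equal; ring).
  rewrite <- Hf.
  assert (H1 := INR_fact_neq_0 i). assert (H2 := INR_fact_neq_0 n).
  assert (H3 : 2^n <> 0) by (apply pow_nonzero; lra).
  field. repeat split; auto.
Qed.

Fixpoint T (n : nat) (f : nat -> R) : R :=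
  match n with 0%nat => f 0%nat | S n => T n f - T n (fun k => f (S k)) end.

Lemma T_lin n (f g : nat -> R) (al be : R) :
  T n (fun k => al * f k + be * g k) = al * T n f + be * T n g.
Proof.
  revert f g; induction n as [|n IH]; intros f g; simpl; [ring|].
  rewrite IH, (IH (fun k => f (S k)) (fun k => g (S k))). ring.
Qed.

Lemma T_ext n f g : (forall k, f k = g k) -> T n f = T n g.
Proof. intro H. apply functional_extensionality in H. now subst. Qed.

Lemma T_step n f : T (S n) f = T n (fun k => f k - f (S k)).
Proof.
  simpl. rewrite <- (Rmult_1_l (T n f)), <- (Rmult_1_l (T n (fun k => f (S k)))).
  replace (1 * T n f - 1 * T n (fun k => f (S k))) with (1 * T n f + (-1) * T n (fun k => f (S k))) by ring.
  rewrite <- T_lin. apply T_ext; intro; ring.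
Qed.

Fixpoint poch (x : R) (m : nat) : R :=
  match m with 0%nat => 1 | S m => poch x m * (x + INR m) end.

Lemma poch_S' x m : poch x (S m) = x * poch (x+1) m.
Proof.
  induction m as [|m IH]; cbn [poch] in *; [simpl; ring|].
  rewrite IH. rewrite S_INR. ring.
Qed.

Lemma poch_diff x m : poch (x+1) (S m) - poch x (S m) = INR (S m) * poch (x+1) m.
Proof. rewrite (poch_S' x m). cbn [poch]. rewrite S_INR. ring. Qed.

Lemma poch_pos x m : 0 < x -> 0 < poch x m.
Proof. intro H; induction m; cbn [poch]; [lra|]. apply Rmult_lt_0_compat; auto. pose proof (pos_INR m); lra. Qed.

Lemma T_poch_lt n : forall m a, (m < n)%nat -> T n (fun k => poch (INR k + a) m) = 0.
Proof.
  induction n as [|n IH]; intros m a H; [lia|].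
  rewrite T_step. destruct m as [|m].
  - simpl. rewrite <- (Rmult_0_l (T n (fun _ => 0))), <- (Rplus_0_r (0 * T n (fun _ => 0))).
    rewrite <- (Rmult_0_l (T n (fun _ => 0))) at 2.
    rewrite <- T_lin. apply T_ext; intro; ring.
  - rewrite (T_ext _ _ (fun k => (- INR (S m)) * poch (INR k + (a+1)) m + 0 * 0)).
    + rewrite T_lin. destruct n as [|n]; [lia|]. rewrite IH by lia. ring.
    + intro k. rewrite S_INR. replace (INR k + 1 + a) with ((INR k + a) + 1) by ring.
      rewrite <- Rplus_assoc. pose proof (poch_diff (INR k + a) m). lra.
Qed.

Lemma T_poch_eq n : forall a, T n (fun k => poch (INR k + a) n) = (-1)^n * INR (Factorial.fact n).
Proof.
  induction n as [|n IH]; intros a; [simpl; ring|].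
  rewrite T_step.
  rewrite (T_ext _ _ (fun k => (- INR (S n)) * poch (INR k + (a+1)) n + 0 * 0)).
  + rewrite T_lin, IH. rewrite fact_simpl, mult_INR. simpl. ring.
  + intro k. rewrite S_INR. replace (INR k + 1 + a) with ((INR k + a) + 1) by ring.
    rewrite <- Rplus_assoc. pose proof (poch_diff (INR k + a) n). lra.
Qed.

Lemma T_inv n : forall c, 0 < c -> T n (fun k => / (INR k + c)) = INR (Factorial.fact n) / poch c (S n).
Proof.
  induction n as [|n IH]; intros c Hc.
  - simpl. field. lra.
  - simpl T. rewrite IH by lra.
    rewrite (T_ext _ (fun k => / (INR (S k) + c)) (fun k => / (INR k + (c + 1)))).
    2: { intro k; rewrite S_INR; f_equal; ring. }
    rewrite IH by lra.
    rewrite (poch_S' c (S n)), (poch_S' c n). simpl poch. rewrite fact_simpl, mult_INR, S_INR.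
    assert (0 < poch (c+1) n) by (apply poch_pos; lra).
    pose proof (pos_INR n).
    field. repeat split; lra.
Qed.

Lemma T_main n c : 0 < c -> forall m, (m <= n)%nat ->
  T n (fun k => poch (INR k + 1) m / (INR k + c)) = poch (1 - c) m * INR (Factorial.fact n) / poch c (S n).
Proof.
  intros Hc m; induction m as [|m IH]; intro Hm.
  - change (poch (1-c) 0) with 1.
    rewrite (T_ext _ _ (fun k => / (INR k + c))) by (intro; cbn [poch]; unfold Rdiv; ring).
    rewrite T_inv by lra. set (P := poch c (S n)). unfold Rdiv; ring.
  - rewrite (T_ext _ _ (fun k => 1 * poch (INR k + 1) m + (1 + INR m - c) * (poch (INR k + 1) m / (INR k + c)))).
    + rewrite T_lin, IH by lia. rewrite (T_poch_lt n m 1) by lia. change (poch (1-c) (S m)) with (poch (1-c) m * (1 - c + INR m)). set (P := poch c (S n)). set (Q := poch (1-c) m). unfold Rdiv; ring.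
    + intro k. cbn [poch]. pose proof (pos_INR k). field. lra.
Qed.

Lemma C_n_0 n : Binomial.C n 0 = 1.
Proof. unfold Binomial.C. rewrite Nat.sub_0_r. simpl. pose proof (INR_fact_neq_0 n). field. auto. Qed.
Lemma C_n_n n : Binomial.C n n = 1.
Proof. unfold Binomial.C. rewrite Nat.sub_diag. simpl. pose proof (INR_fact_neq_0 n). field. auto. Qed.

Lemma T_sum n : forall f, T n f = sum_f_R0 (fun k => (-1)^k * Binomial.C n k * f k) n.
Proof.
  induction n as [|n IH]; intro f.
  - simpl. rewrite C_n_0. ring.
  - cbn [T]. rewrite !IH. destruct n as [|m].
    + simpl. rewrite (C_n_0 0), (C_n_0 1), (C_n_n 1). ring.
    + rewrite (decomp_sum _ (S (S m))) by lia. rewrite (decomp_sum _ (S m)) by lia. simpl pred.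
      rewrite !(tech5 _ m).
      rewrite (sum_eq (fun i => (-1) ^ S i * Binomial.C (S (S m)) (S i) * f (S i))
        (fun i => (-1) ^ S i * Binomial.C (S m) (S i) * f (S i) + ((-1) ^ i * Binomial.C (S m) i * f (S i)) * (-1))).
      2: { intros i Hi. rewrite <- pascal by lia. simpl pow. ring. }
      rewrite plus_sum. rewrite <- scal_sum. rewrite !C_n_0, !C_n_n. simpl pow. ring.
Qed.

Lemma fact_poch n k : INR (Factorial.fact (n + k)) = INR (Factorial.fact k) * poch (INR k + 1) n.
Proof.
  induction n as [|n IH]; [simpl; ring|].
  replace (S n + k)%nat with (S (n + k)) by lia. rewrite fact_simpl, mult_INR, IH.
  cbn [poch]. rewrite S_INR, plus_INR. ring.
Qed.

Lemma a_alt n k : a n k = (-1)^n / INR (Factorial.fact n) * ((-1)^k * Binomial.C n k * poch (INR k + 1) n).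
Proof.
  unfold a. rewrite fact_poch, pow_add. pose proof (INR_fact_neq_0 n). pose proof (INR_fact_neq_0 k).
  field. auto.
Qed.

Lemma sum_a_T n (w : nat -> R) :
  sum_f_R0 (fun k => a n k * w k) n = (-1)^n / INR (Factorial.fact n) * T n (fun k => poch (INR k + 1) n * w k).
Proof.
  rewrite T_sum, scal_sum. apply sum_eq; intros k _. rewrite a_alt. ring.
Qed.

Lemma T_scal n f al : T n (fun k => al * f k) = al * T n f.
Proof.
  rewrite (T_ext _ _ (fun k => al * f k + 0 * f k)) by (intro; ring). rewrite T_lin. ring.
Qed.

Lemma m1sq n : (-1)^n * (-1)^n = 1.
Proof. rewrite <- Rpow_mult_distr. replace (-1 * -1) with 1 by ring. apply pow1. Qed.

Lemma F2 n : Pt n 1 = 1.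
Proof.
  unfold Pt. rewrite (sum_eq _ (fun k => a n k * 1)) by (intros; rewrite pow1; ring).
  rewrite sum_a_T. rewrite (T_ext _ _ (fun k => poch (INR k + 1) n)) by (intro; ring).
  rewrite T_poch_eq. pose proof (INR_fact_neq_0 n). pose proof (m1sq n).
  replace ((-1) ^ n / INR (Factorial.fact n) * ((-1) ^ n * INR (Factorial.fact n))) with ((-1)^n * (-1)^n) by (field; auto). exact H0.
Qed.

Lemma F3 n : (0 < n)%nat -> sum_f_R0 (fun k => a n k * / (INR k + 1)) n = 0.
Proof.
  intro Hn. rewrite sum_a_T.
  rewrite (T_ext _ _ (fun k => poch (INR k + 1) n / (INR k + 1))) by (intro; reflexivity).
  rewrite (T_main n 1 ltac:(lra) n (le_n n)).
  destruct n as [|n]; [lia|]. rewrite poch_S'. replace (1 - 1) with 0 by ring. unfold Rdiv; ring.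
Qed.

Lemma F4 n : sum_f_R0 (fun k => a n k * / (2 * INR k + 1)) n = (-1)^n / (2 * INR n + 1).
Proof.
  rewrite sum_a_T.
  rewrite (T_ext _ _ (fun k => /2 * (poch (INR k + 1) n / (INR k + /2)))).
  2: { intro k. pose proof (pos_INR k). field. lra. }
  rewrite T_scal, (T_main n (/2) ltac:(lra) n (le_n n)).
  replace (1 - /2) with (/2) by field. cbn [poch].
  assert (0 < poch (/2) n) by (apply poch_pos; lra).
  pose proof (INR_fact_neq_0 n). pose proof (pos_INR n).
  field. repeat split; lra.
Qed.

Lemma F5 n k : (k < n)%nat ->
  (INR k + 1)^2 * a n (S k) = (INR k * (INR k + 1) - INR n * (INR n + 1)) * a n k.
Proof.
  intro H. rewrite !a_alt. rewrite pascal_step3 by lia.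
  rewrite minus_INR by lia. rewrite S_INR.
  assert (Hp : poch (INR k + 1 + 1) n = poch (INR k + 1) n * (INR k + 1 + INR n) / (INR k + 1)).
  { pose proof (poch_S' (INR k + 1) n) as E. cbn [poch] in E. pose proof (pos_INR k).
    apply (Rmult_eq_reg_l (INR k + 1)); [|lra]. rewrite <- E. field. lra. }
  rewrite Hp. pose proof (pos_INR k). pose proof (INR_fact_neq_0 n). simpl pow.
  field. split; [auto| lra].
Qed.

Definition Pd n u := sum_f_R0 (fun k => (a n k * INR k) * u ^ (k - 1)) n.
Definition Pdd n u := sum_f_R0 (fun k => (a n k * INR k) * INR (k - 1) * u ^ (k - 1 - 1)) n.

Lemma Pt_deriv n u : is_derive (Pt n) u (Pd n u).
Proof. exact (is_derive_psum (a n) (fun k => k) n u). Qed.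
Lemma Pd_deriv n u : is_derive (Pd n) u (Pdd n u).
Proof. exact (is_derive_psum (fun k => a n k * INR k) (fun k => k - 1)%nat n u). Qed.

Lemma tele (d e : nat -> R) n : d 0%nat = 0 -> (forall k, (k < n)%nat -> d (S k) = - e k) ->
  forall m, (m <= n)%nat -> sum_f_R0 (fun k => d k + e k) m = e m.
Proof.
  intros H0 H m; induction m as [|m IH]; intro Hm; simpl; [rewrite H0; ring|].
  rewrite IH by lia. rewrite H by lia. ring.
Qed.

Lemma ODE n u : u * (1 - u) * Pdd n u + (1 - 2 * u) * Pd n u + INR n * (INR n + 1) * Pt n u = 0.
Proof.
  unfold Pdd, Pd, Pt. rewrite !scal_sum, <- !plus_sum.
  rewrite (sum_eq _ (fun k => (a n k * INR k ^ 2 * u ^ (k - 1)) + (a n k * (INR n * (INR n + 1) - INR k * (INR k + 1)) * u ^ k))).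
  - rewrite (tele (fun k => a n k * INR k ^ 2 * u ^ (k - 1)) (fun k => a n k * (INR n * (INR n + 1) - INR k * (INR k + 1)) * u ^ k) n); [ring| | |lia].
    + simpl. ring.
    + intros k Hk. pose proof (F5 n k Hk) as E. replace (S k - 1)%nat with k by lia.
      rewrite S_INR. replace (a n (S k) * (INR k + 1) ^ 2) with ((INR k + 1)^2 * a n (S k)) by ring.
      rewrite E. ring.
  - intros k _. destruct k as [|[|j]].
    + simpl. ring.
    + simpl. ring.
    + cbn [Nat.sub pow]. rewrite !S_INR. replace (j - 0)%nat with j by lia. ring.
Qed.

Definition Cf n t := sum_f_R0 (fun k => (a n k / (2 * INR k + 1)) * t ^ (2*k+1)) n.
Definition Df n t := sum_f_R0 (fun k => (a n k / (INR k + 1)) * t ^ (2*k+2)) n.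
Definition Fa n t := - / (INR n * (INR n + 1)) *
  (ln (1 - t) * (t^2 * (1 - t^2) * Pd n (t^2)) + (t + t^2)/2 * Pt n (t^2) - Cf n t / 2 - Df n t / 2).

Lemma Cf_deriv n t : is_derive (Cf n) t (Pt n (t^2)).
Proof.
  eapply is_derive_eq. exact (is_derive_psum (fun k => a n k / (2 * INR k + 1)) (fun k => 2*k+1)%nat n t).
  unfold Pt. apply sum_eq; intros k _. replace (2*k+1-1)%nat with (2*k)%nat by lia.
  rewrite pow_mult, plus_INR, mult_INR. pose proof (pos_INR k). simpl INR. field. lra.
Qed.

Lemma Df_deriv n t : is_derive (Df n) t (2 * t * Pt n (t^2)).
Proof.
  eapply is_derive_eq. exact (is_derive_psum (fun k => a n k / (INR k + 1)) (fun k => 2*k+2)%nat n t).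
  unfold Pt. rewrite scal_sum. apply sum_eq; intros k _. replace (2*k+2-1)%nat with (S (2*k))%nat by lia.
  change (t ^ S (2*k)) with (t * t^(2*k)).
  rewrite pow_mult, plus_INR, mult_INR. pose proof (pos_INR k). simpl INR. field. lra.
Qed.

Lemma Fa_deriv n t : (0 < n)%nat -> t < 1 -> is_derive (Fa n) t (2 * t * ln (1 - t) * Pt n (t^2)).
Proof.
  intros Hn Ht. unfold Fa. auto_derive.
  - repeat split; try lra; eexists; [apply Pd_deriv|apply Pt_deriv|apply Cf_deriv|apply Df_deriv].
  - rewrite (is_derive_unique (fun x => Pd n x) _ _ (Pd_deriv n _)).
    rewrite (is_derive_unique (fun x => Pt n x) _ _ (Pt_deriv n _)).
    rewrite (is_derive_unique (fun x => Cf n x) _ _ (Cf_deriv n _)).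
    rewrite (is_derive_unique (fun x => Df n x) _ _ (Df_deriv n _)).
    replace (t^2) with (t*(t*1)) by ring.
    set (u := t*(t*1)).
    pose proof (ODE n u) as E.
    assert (Hn' : 0 < INR n) by (apply lt_0_INR; lia).
    assert (Ept : Pt n u = -(u*(1-u)*Pdd n u + (1-2*u)*Pd n u)/(INR n*(INR n+1))).
    { apply (Rmult_eq_reg_l (INR n * (INR n + 1))). 2: nra.
      field_simplify. 2: nra. lra. }
    rewrite Ept. unfold u. unfold Rminus. field. split; [lra| nra].
Qed.

Lemma ball_R (x e y : R) : ball x e y <-> Rabs (Rminus y x) < e.
Proof. unfold ball; simpl; unfold AbsRing_ball, abs, minus, plus, opp; simpl. tauto. Qed.

Lemma ln_le_sub1 y : 0 < y -> ln y <= y - 1.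
Proof. intro H. pose proof (exp_ineq1_le (ln y)). rewrite exp_ln in H0 by lra. lra. Qed.

Lemma sln_bound s : 0 < s < 1 -> Rabs (s * ln s) <= 2 * sqrt s.
Proof.
  intro Hs. set (r := sqrt s).
  assert (Hr : 0 < r) by (apply sqrt_lt_R0; lra).
  assert (Hs' : s = r * r) by (unfold r; rewrite sqrt_sqrt; lra).
  assert (Hl : ln s = 2 * ln r) by (rewrite Hs', ln_mult by lra; ring).
  assert (Hneg : ln s < 0) by (rewrite <- ln_1; apply ln_increasing; lra).
  assert (Hb : ln (/ r) <= / r - 1) by (apply ln_le_sub1; apply Rinv_0_lt_compat; lra).
  rewrite ln_Rinv in Hb by lra.
  assert (Hb2 : - r * ln r <= 1 - r).
  { replace (1 - r) with (r * (/ r - 1)) by (field; lra).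
    replace (- r * ln r) with (r * (- ln r)) by ring. apply Rmult_le_compat_l; lra. }
  rewrite Rabs_left.
  - rewrite Hl, Hs'. nra.
  - rewrite Hs' in *. nra.
Qed.

Definition psi (t : R) := (1 - t) * ln (1 - t).

Lemma psi_cont : continuous psi 1.
Proof.
  apply filterlim_locally. intro eps.
  assert (He : 0 < Rmin 1 ((eps/2)^2)).
  { apply Rmin_glb_lt; [lra|]. pose proof (cond_pos eps). nra. }
  exists (mkposreal _ He). intros y Hy. apply ball_R in Hy. apply ball_R.
  assert (Hy2 : Rabs (y - 1) < Rmin 1 ((eps/2)^2)) by exact Hy. clear Hy. rename Hy2 into Hy.
  change (Rabs (psi y - psi 1) < eps).
  assert (H1 : psi 1 = 0) by (unfold psi; ring). rewrite H1.
  destruct (Rlt_or_le y 1) as [Hy1|Hy1].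
  - unfold psi. rewrite Rminus_0_r.
    assert (Hy' : 0 < 1 - y < 1).
    { split; [lra|]. pose proof (Rmin_l 1 ((eps/2)^2)). apply Rabs_lt_between in Hy. lra. }
    eapply Rle_lt_trans. apply sln_bound; auto.
    assert (Hs : 1 - y < (eps/2)^2).
    { pose proof (Rmin_r 1 ((eps/2)^2)). apply Rabs_lt_between in Hy. lra. }
    assert (sqrt (1 - y) < eps / 2).
    { rewrite <- (sqrt_pow2 (eps/2)) by (pose proof (cond_pos eps); lra).
      pose proof (cond_pos eps). apply sqrt_lt_1; nra. }
    lra.
  - unfold psi. unfold ln. destruct (Rlt_dec 0 (1 - y)); [exfalso; lra|].
    rewrite Rmult_0_r, Rminus_0_r, Rabs_R0. apply cond_pos.
Qed.

Lemma cR_mult (f g : R -> R) x : continuous f x -> continuous g x -> continuous (fun y => f y * g y) x.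
Proof. exact (continuous_mult f g x). Qed.
Lemma cR_plus (f g : R -> R) x : continuous f x -> continuous g x -> continuous (fun y => f y + g y) x.
Proof. exact (continuous_plus f g x). Qed.
Lemma cR_minus (f g : R -> R) x : continuous f x -> continuous g x -> continuous (fun y => f y - g y) x.
Proof. exact (continuous_minus f g x). Qed.

Lemma cR_der (f : R -> R) x : ex_derive f x -> continuous f x.
Proof. intro H. exact (ex_derive_continuous f x H). Qed.
Lemma cR_const (c x : R) : continuous (fun _ : R => c) x.
Proof. exact (continuous_const (U:=R_UniformSpace) (V:=R_UniformSpace) c x). Qed.

Lemma Fa0 n : Fa n 0 = 0.
Proof.
  unfold Fa, Cf, Df. rewrite !sum_eq_R0.
  - replace (1 - 0) with 1 by ring. rewrite ln_1. unfold Rdiv; ring.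
  - intros k _. rewrite pow_i by lia. ring.
  - intros k _. rewrite pow_i by lia. ring.
Qed.

Lemma Fa_cont1 n : continuous (Fa n) 1.
Proof.
  replace (Fa n) with (fun t => - / (INR n * (INR n + 1)) * (psi t * (t^2*(1+t)*Pd n (t^2)) + ((t+t^2)/2*Pt n (t^2) - Cf n t/2 - Df n t/2))).
  2: { apply functional_extensionality; intro t. unfold Fa, psi. unfold Rdiv; ring. }
  apply cR_mult. apply cR_const.
  apply cR_plus. apply cR_mult. apply psi_cont.
  - apply cR_der. auto_derive. eexists; apply Pd_deriv.
  - apply cR_der. auto_derive. repeat split; eexists; [apply Pt_deriv|apply Cf_deriv|apply Df_deriv].
Qed.

Lemma lim_Fa n : filterlim (fun b => Fa n (sqrt b)) (at_left 1) (locally (Fa n 1)).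
Proof.
  apply (filterlim_filter_le_1 _ (filter_le_within _)).
  pose proof (continuous_comp sqrt (Fa n) 1 (continuous_sqrt 1)) as H.
  replace (Fa n 1) with (Fa n (sqrt 1)) by (rewrite sqrt_1; reflexivity).
  apply H. rewrite sqrt_1. apply Fa_cont1.
Qed.

Lemma fc n x : 0 <= x < 1 -> continuous (fun x => ln (1 - sqrt x) * Pt n x) x.
Proof.
  intro Hx. apply cR_mult.
  - apply (continuous_comp (fun x => 1 - sqrt x) ln).
    + apply cR_minus. apply cR_const. apply continuous_sqrt.
    + apply continuous_ln. assert (sqrt x < 1) by (rewrite <- sqrt_1; apply sqrt_lt_1; lra). lra.
  - apply cR_der. eexists; apply Pt_deriv.
Qed.

Lemma piece n b : (0 < n)%nat -> 0 <= b < 1 ->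
  is_RInt (fun x => ln (1 - sqrt x) * Pt n x) 0 b (Fa n (sqrt b)).
Proof.
  intros Hn Hb. set (sb := sqrt b).
  assert (Hsb : 0 <= sb < 1).
  { unfold sb; split; [apply sqrt_pos|]. rewrite <- sqrt_1; apply sqrt_lt_1; lra. }
  assert (Hsb2 : sb ^ 2 = b) by (unfold sb; apply pow2_sqrt; lra).
  assert (Hcomp := is_RInt_comp (fun x => ln (1 - sqrt x) * Pt n x) (fun t => t^2) (fun t => 2*t) 0 sb).
  rewrite Rmin_left, Rmax_right in Hcomp by lra.
  specialize (Hcomp ltac:(intros x Hx; apply fc; split; nra)).
  specialize (Hcomp ltac:(intros x Hx; split; [auto_derive; [easy|ring]| apply cR_der; auto_derive; easy])).
  assert (Hder := is_RInt_derive (Fa n) (fun t => 2 * t * ln (1 - t) * Pt n (t^2)) 0 sb).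
  rewrite Rmin_left, Rmax_right in Hder by lra.
  specialize (Hder ltac:(intros x Hx; apply Fa_deriv; [easy|lra])).
  specialize (Hder ltac:(intros x Hx; apply cR_der; auto_derive; split; [lra|split; [eexists; apply Pt_deriv|easy]])).
  apply (is_RInt_ext _ (fun y => scal (2*y) (ln (1 - sqrt (y^2)) * Pt n (y^2)))) in Hder.
  2: { rewrite Rmin_left, Rmax_right by lra. intros x Hx. rewrite sqrt_pow2 by lra.
       unfold scal; simpl; unfold mult; simpl. ring. }
  apply is_RInt_unique in Hcomp. apply (is_RInt_unique (V:=R_CompleteNormedModule)) in Hder.
  assert (E : RInt (fun x => ln (1 - sqrt x) * Pt n x) 0 b = Fa n sb).
  { rewrite <- Hsb2. replace 0 with (0^2) at 1 by ring. rewrite <- Hcomp.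
    etransitivity; [exact Hder|]. rewrite Fa0. unfold minus, plus, opp; simpl; ring. }
  rewrite <- E.
  apply (RInt_correct (V:=R_CompleteNormedModule)). apply (ex_RInt_continuous (V:=R_CompleteNormedModule)). rewrite Rmin_left, Rmax_right by lra.
  intros z Hz. apply fc. lra.
Qed.

Lemma Fa1 n : (0 < n)%nat ->
  Fa n 1 = ((-1) ^ n - 4 * INR n - 2) / (2 * INR n * (INR n + 1) * (2 * INR n + 1)).
Proof.
  intro Hn. unfold Fa. replace (1^2) with 1 by ring. rewrite F2.
  assert (HC : Cf n 1 = (-1)^n / (2 * INR n + 1)).
  { rewrite <- F4. unfold Cf. apply sum_eq; intros k _. rewrite pow1. unfold Rdiv. ring. }
  assert (HD : Df n 1 = 0).
  { rewrite <- (F3 n Hn). unfold Df. apply sum_eq; intros k _. rewrite pow1. unfold Rdiv. ring. }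
  rewrite HC, HD. assert (0 < INR n) by (apply lt_0_INR; lia).
  replace (1 - 1) with 0 by ring. field. repeat split; nra.
Qed.

Theorem mainTheorem8 (n : nat) (hn : (0 < n)%nat) :
  is_RInt_gen (fun x => ln (1 - sqrt x) * Legendre n (2 * x - 1))
    (at_point 0) (at_left 1)
    (((-1) ^ n - 4 * INR n - 2) / (2 * INR n * (INR n + 1) * (2 * INR n + 1))).
Proof.
  replace (fun x => ln (1 - sqrt x) * Legendre n (2 * x - 1)) with (fun x => ln (1 - sqrt x) * Pt n x)
    by (apply functional_extensionality; intro x; rewrite F1; reflexivity).
  rewrite <- (Fa1 n hn).
  intros P HP.
  assert (HL := lim_Fa n P HP).
  unfold filtermapi.
  apply Filter_prod with (Q := fun a => a = 0) (R := fun b => 0 < b < 1 /\ P (Fa n (sqrt b))).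
  - reflexivity.
  - apply filter_and; [|exact HL].
    assert (Hh : 0 < 1/2) by lra.
    exists (mkposreal _ Hh). intros y Hy Hlt. apply ball_R in Hy.
    assert (Hy2 : Rabs (y - 1) < 1/2) by exact Hy. apply Rabs_lt_between in Hy2. lra.
  - intros x y Hx [Hy HPy]. simpl. subst x. exists (Fa n (sqrt y)). split; [apply piece; [easy|lra] | exact HPy].
Qed.
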